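(* Consider the data model $\boldsymbol x=\boldsymbol f(\boldsymbol s)$ and the J-VolMax problem. Assume there is a finite set $\mathcal{S}_N=\{\boldsymbol s^{(1)},\dots,\boldsymbol s^{(N)}\}\subset\mathcal{S}$, with $\boldsymbol x^{(n)}=\boldsymbol f(\boldsymbol s^{(n)})$, such that the SDI condition holds at each $\boldsymbol s^{(n)}$. Let $\widehat{\boldsymbol g}\in\mathcal{G}$ be the optimal encoder learned by J-VolMax, and suppose $$\widehat{\boldsymbol g}(\boldsymbol x^{(n)})=\widehat{\boldsymbol\Pi}(\boldsymbol s^{(n)})\widehat{\boldsymbol\rho}(\boldsymbol s^{(n)}),\quad\forall\boldsymbol s^{(n)}\in\mathcal{S}_N,$$ for permutation matrices $\widehat{\boldsymbol\Pi}(\boldsymbol s^{(n)})\in\mathcal{P}_d$ possibly depending on $\boldsymbol s^{(n)}$ and a map $\widehat{\boldsymbol\rho}(\boldsymbol s)=(\widehat\rho_1(s_1),\dots,\widehat\rho_d(s_d))$ of invertible component-wise transformations. Suppose moreover: 1. $\boldsymbol f,\widehat{\boldsymbol g},\widehat{\boldsymbol\rho}$ are Lipschitz continuous with constants $L_{\boldsymbol f},L_{\widehat{\boldsymbol g}},L_{\widehat{\boldsymbol\rho}}>0$; 2. there is $\gamma>0$ such that for every $\boldsymbol\Pi\in\mathcal{P}_d$ with $\boldsymbol\Pi\ne\widehat{\boldsymbol\Pi}(\boldsymbol s^{(n)})$, $\|\widehat{\boldsymbol g}(\boldsymbol x^{(n)})-\boldsymbol\Pi\widehat{\boldsymbol\rho}(\boldsymbol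 s^{(n)})\|_2\ge\gamma$ for all $n\in[N]$; 3. with $\mathcal{N}^{(n)}=\{\boldsymbol s\in\mathcal{S}:\|\boldsymbol s-\boldsymbol s^{(n)}\|_2<r^{(n)}\}$ where $r^{(n)}<\frac{\gamma}{2(L_{\boldsymbol f}L_{\widehat{\boldsymbol g}}+L_{\widehat{\boldsymbol\rho}})}$, the union $\mathcal{N}=\bigcup_{n=1}^N\mathcal{N}^{(n)}$ is a connected subset of $\mathcal{S}$. Then $\widehat{\boldsymbol\Pi}(\boldsymbol s^{(n)})=\widehat{\boldsymbol\Pi}$ for a single fixed $\widehat{\boldsymbol\Pi}\in\mathcal{P}_d$, and consequently $\widehat{\boldsymbol g}(\boldsymbol x^{(n)})=\widehat{\boldsymbol\Pi}\widehat{\boldsymbol\rho}(\boldsymbol s^{(n)})$ for all $n\in[N]$.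
   Context: Data model: $\boldsymbol{s}\in\mathbb{R}^d$ is a random vector with distribution $p(\boldsymbol{s})$ and support $\mathcal{S}\subseteq\mathbb{R}^d$; $\boldsymbol{f}=(f_1,\dots,f_m):\mathbb{R}^d\to\mathbb{R}^m$ with $m\ge d$ is an unknown diffeomorphism mapping $\mathcal{S}$ onto a $d$-dimensional manifold $\mathcal{X}\subset\mathbb{R}^m$, and $\boldsymbol{x}=\boldsymbol{f}(\boldsymbol{s})$. $\boldsymbol{J}_{\boldsymbol f}(\boldsymbol s)\in\mathbb{R}^{m\times d}$ has entries $\partial f_i/\partial s_j$; its $i$-th row is $\nabla f_i(\boldsymbol s)^\top$. $\mathcal{P}_d$ denotes the set of $d\times d$ permutation matrices. Convex geometry: for $\boldsymbol{w}(\boldsymbol s)$ with positive entries, $\mathcal{B}_1^{\boldsymbol w(\boldsymbol s)}=\{\boldsymbol y\in\mathbb{R}^d:\sum_k |y_k|/w_k(\boldsymbol s)\le 1\}$, and $\mathcal{B}_\infty^{\boldsymbol w(\boldsymbol s)}$ denotes its polar $\{\boldsymbol y:\max_k w_k(\boldsymbol s)|y_k|\le1\}$, with extreme points $(\pm w_1(\boldsymbol s)^{-1},\dots,\pm w_d(\boldsymbol s)^{-1})$. For a bounded convex set $P$: $\mathcal{E}(P)$ is its maximum-volume inscribed ellipsoid, $P^*=\{\boldsymbol x:\boldsymbol x^\top\boldsymbol y\le1\ \forall\boldsymbol y\in P\}$, ${\rm bd}(P)$ its boundary, ${\rm extr}(P)$ its extreme points; ${\rm conv}$ is convex hull. SDI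 condition at $\boldsymbol s$: there is $\boldsymbol w(\boldsymbol s)$ with positive entries such that $\nabla f_1(\boldsymbol s),\dots,\nabla f_m(\boldsymbol s)\in\mathcal{B}_1^{\boldsymbol w(\boldsymbol s)}$ and (1) $\mathcal{E}(\mathcal{B}_1^{\boldsymbol w(\boldsymbol s)})\subseteq{\rm conv}\{\nabla f_i(\boldsymbol s)\}_{i=1}^m\subseteq\mathcal{B}_1^{\boldsymbol w(\boldsymbol s)}$; (2) ${\rm conv}\{\nabla f_i(\boldsymbol s)\}_{i=1}^m{}^*\cap{\rm bd}(\mathcal{E}(\mathcal{B}_1^{\boldsymbol w(\boldsymbol s)})^* )={\rm extr}(\mathcal{B}_\infty^{\boldsymbol w(\boldsymbol s)})$. J-VolMax: with decoder $\boldsymbol f_{\boldsymbol\theta}:\mathbb{R}^d\to\mathbb{R}^m$, encoder $\boldsymbol g_{\boldsymbol\phi}:\mathbb{R}^m\to\mathbb{R}^d$ from a class $\mathcal{G}$, and constant $C>0$: maximize $\mathbb{E}[\log\det(\boldsymbol J_{\boldsymbol f_{\boldsymbol\theta}}(\boldsymbol g_{\boldsymbol\phi}(\boldsymbol x))^\top\boldsymbol J_{\boldsymbol f_{\boldsymbol\theta}}(\boldsymbol g_{\boldsymbol\phi}(\boldsymbol x)))]$ subject to $\|[\boldsymbol J_{\boldsymbol f_{\boldsymbol\theta}}(\boldsymbol g_{\boldsymbol\phi}(\boldsymbol x))]_{i,:}\|_1\le C$ for all $i\in[m]$ and $\boldsymbol x=\boldsymbol f_{\boldsymbol\theta}(\boldsymbol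 g_{\boldsymbol\phi}(\boldsymbol x))$ for all $\boldsymbol x\in\mathcal{X}$. *)

(* Defs.v *)
From HB Require Import structures.
From mathcomp Require Import all_boot all_order all_algebra.
From mathcomp Require Import all_classical all_reals all_analysis.

Set Implicit Arguments.
Unset Strict Implicit.
Unset Printing Implicit Defensive.

Import Order.TTheory GRing.Theory Num.Theory.
Import numFieldNormedType.Exports.
Local Open Scope classical_set_scope.
Local Open Scope ring_scope.

Definition norm2 {R : realType} {n : nat} (v : 'cV[R]_n) : R :=
  Num.sqrt (\sum_(i < n) (v i 0) ^+ 2).

Definition norm1_row {R : realType} {n : nat} (v : 'rV[R]_n) : R :=
  \sum_(j < n) `|v 0 j|.

Definition lipschitz2 {R : realType} {n k : nat} (L : R)
  (h : 'cV[R]_n -> 'cV[R]_k) : Prop :=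
  forall a b, norm2 (h a - h b) <= L * norm2 (a - b).

Definition jacobian {R : realType} {n k : nat} (h : 'cV[R]_n -> 'cV[R]_k)
  (s : 'cV[R]_n) : 'M[R]_(k, n) :=
  \matrix_(i < k, j < n) derive (fun z : 'cV[R]_n => h z i 0) s (delta_mx j 0).

Definition grad {R : realType} {n k : nat} (h : 'cV[R]_n -> 'cV[R]_k)
  (i : 'I_k) (s : 'cV[R]_n) : 'cV[R]_n := (row i (jacobian h s))^T.

Definition B1w {R : realType} {d : nat} (w : 'I_d -> R) : set 'cV[R]_d :=
  [set y | \sum_(k < d) `|y k 0| / w k <= 1].
Definition Binfw {R : realType} {d : nat} (w : 'I_d -> R) : set 'cV[R]_d :=
  [set y | forall k, w k * `|y k 0| <= 1].

(* Ellipsoid {c + A u : ||u||_2 <= 1}; its volume is proportional to |det A|. *)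
Definition ellipsoid {R : realType} {d : nat} (c : 'cV[R]_d) (A : 'M[R]_d)
  : set 'cV[R]_d := [set c + A *m u | u in [set u | norm2 u <= 1]].

Definition is_MVIE {R : realType} {d : nat} (P E : set 'cV[R]_d) : Prop :=
  exists c A, E = ellipsoid c A /\ E `<=` P /\
    forall c' A', ellipsoid c' A' `<=` P -> `|\det A'| <= `|\det A|.

Definition polar {R : realType} {d : nat} (P : set 'cV[R]_d) : set 'cV[R]_d :=
  [set x | forall y, P y -> (x^T *m y) 0 0 <= 1].

Definition bd {R : realType} {d : nat} (P : set 'cV[R]_d) : set 'cV[R]_d :=
  closure P `\` interior P.

Definition extr {R : realType} {d : nat} (P : set 'cV[R]_d) : set 'cV[R]_d :=
  [set x | P x /\ forall y z (t : R), P y -> P z -> 0 < t < 1 ->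
     x = t *: y + (1 - t) *: z -> y = z].

Definition conv_fin {R : realType} {d m : nat} (v : 'I_m -> 'cV[R]_d)
  : set 'cV[R]_d :=
  [set x | exists l : 'I_m -> R, (forall i, 0 <= l i) /\
     \sum_(i < m) l i = 1 /\ x = \sum_(i < m) l i *: v i].

Definition SDI {R : realType} {d m : nat} (f : 'cV[R]_d -> 'cV[R]_m)
  (s : 'cV[R]_d) : Prop :=
  exists w : 'I_d -> R, (forall k, 0 < w k) /\
    (forall i, B1w w (grad f i s)) /\
    exists E, is_MVIE (B1w w) E /\
      E `<=` conv_fin (fun i => grad f i s) /\
      conv_fin (fun i => grad f i s) `<=` B1w w /\
      polar (conv_fin (fun i => grad f i s)) `&` bd (polar E)
        = extr (Binfw w).

(* f is a diffeomorphism of R^d onto its image (a d-dimensional embedded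
   manifold of R^m): differentiable, injective immersion, with a continuous
   inverse on its image. *)
Definition diffeo_onto_image {R : realType} {d m : nat}
  (f : 'cV[R]_d -> 'cV[R]_m) : Prop :=
  (forall s, differentiable f s) /\
  (forall s, \rank (jacobian f s) = d) /\
  exists h : 'cV[R]_m -> 'cV[R]_d, (forall s, h (f s) = s) /\
    {within range f, continuous h}.

(* log det with log 0 = -oo (det(J^T J) >= 0 always). *)
Definition logdet_e {R : realType} (z : R) : \bar R :=
  if 0 < z then (ln z)%:E else -oo%E.

Section JVolMax.
Context {R : realType} {d m : nat} {dT : measure_display} {T : measurableType dT}.
Variables (P : probability T R) (xv : T -> 'cV[R]_m) (X : set 'cV[R]_m)
  (Theta Phi : Type) (fdec : Theta -> 'cV[R]_d -> 'cV[R]_m)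
  (genc : Phi -> 'cV[R]_m -> 'cV[R]_d) (G : set ('cV[R]_m -> 'cV[R]_d)) (C : R).

Definition jvm_feasible (th : Theta) (ph : Phi) : Prop :=
  G (genc ph) /\
  (forall x, X x -> forall i : 'I_m,
      norm1_row (row i (jacobian (fdec th) (genc ph x))) <= C) /\
  (forall x, X x -> x = fdec th (genc ph x)).

Definition jvm_objective (th : Theta) (ph : Phi) : \bar R :=
  (\int[P]_w logdet_e (\det ((jacobian (fdec th) (genc ph (xv w)))^T
                              *m jacobian (fdec th) (genc ph (xv w)))))%E.

Definition jvm_optimal (th : Theta) (ph : Phi) : Prop :=
  jvm_feasible th ph /\
  forall th' ph', jvm_feasible th' ph' ->
    (jvm_objective th' ph' <= jvm_objective th ph)%E.
End JVolMax.

(* Main.v *)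
Require Import Defs.
From HB Require Import structures.
From mathcomp Require Import all_boot all_order all_algebra.
From mathcomp Require Import all_classical all_reals all_analysis.
From mathcomp Require Import lra ring.
Import Order.TTheory GRing.Theory Num.Theory.
Import numFieldNormedType.Exports.
Local Open Scope classical_set_scope.
Local Open Scope ring_scope.

Section N2.
Variable R : realType.

Lemma norm2_ge0 n (v : 'cV[R]_n) : 0 <= norm2 v.
Proof. exact: sqrtr_ge0. Qed.

Lemma cs_ineq n (a b : 'I_n -> R) :
  (\sum_i a i * b i) ^+ 2 <= (\sum_i a i ^+ 2) * (\sum_i b i ^+ 2).
Proof.
have H0 : 0 <= \sum_i \sum_j (a i * b j - a j * b i) ^+ 2.
  by apply: sumr_ge0 => i _; apply: sumr_ge0 => j _; exact: sqr_ge0.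
have E : \sum_i \sum_j (a i * b j - a j * b i) ^+ 2 =
  \sum_i \sum_j (a i ^+ 2 * b j ^+ 2) + \sum_i \sum_j (a j ^+ 2 * b i ^+ 2)
  + (-2) * \sum_i \sum_j ((a i * b i) * (a j * b j)).
  rewrite mulr_sumr -!big_split /=; apply: eq_bigr => i _.
  rewrite mulr_sumr -!big_split /=; apply: eq_bigr => j _; ring.
have E1 : \sum_i \sum_j (a i ^+ 2 * b j ^+ 2) = (\sum_i a i ^+ 2) * (\sum_i b i ^+ 2).
  by rewrite mulr_suml; apply: eq_bigr => i _; rewrite mulr_sumr.
have E2 : \sum_i \sum_j (a j ^+ 2 * b i ^+ 2) = (\sum_i a i ^+ 2) * (\sum_i b i ^+ 2).
  by rewrite mulrC mulr_suml; apply: eq_bigr => i _; rewrite mulr_sumr; apply: eq_bigr => j _; rewrite mulrC.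
have E3 : \sum_i \sum_j ((a i * b i) * (a j * b j)) = (\sum_i a i * b i) ^+ 2.
  by rewrite expr2 mulr_suml; apply: eq_bigr => i _; rewrite mulr_sumr.
move: H0; rewrite E E1 E2 E3; lra.
Qed.

Lemma norm2_triangle n (a b : 'cV[R]_n) : norm2 (a + b) <= norm2 a + norm2 b.
Proof.
have CS := @cs_ineq n (fun i => a i 0) (fun i => b i 0); simpl in CS.
set A := \sum_i (a i 0) ^+ 2. set B := \sum_i (b i 0) ^+ 2.
set D := \sum_i (a i 0 * b i 0).
have A0 : 0 <= A by apply: sumr_ge0 => i _; exact: sqr_ge0.
have B0 : 0 <= B by apply: sumr_ge0 => i _; exact: sqr_ge0.
have ES : \sum_i ((a + b) i 0) ^+ 2 = A + B + 2 * D.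
  rewrite /A /B /D mulr_sumr -!big_split /=; apply: eq_bigr => i _.
  rewrite mxE; ring.
have x0 := sqrtr_ge0 A; have y0 := sqrtr_ge0 B.
have xA := sqr_sqrtr A0; have yB := sqr_sqrtr B0.
rewrite /norm2 ES -/A -/B.
have -> : Num.sqrt A + Num.sqrt B = Num.sqrt ((Num.sqrt A + Num.sqrt B) ^+ 2).
  by rewrite sqrtr_sqr ger0_norm // addr_ge0.
rewrite ler_sqrt; last exact: sqr_ge0.
have : D <= Num.sqrt A * Num.sqrt B.
  set x := Num.sqrt A in x0 xA *; set y := Num.sqrt B in y0 yB *.
  have AB : A * B = (x * y) ^+ 2 by rewrite exprMn xA yB.
  rewrite AB in CS.
  have xy0 : 0 <= x * y by apply: mulr_ge0.
  set u := x * y in xy0 AB CS *.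
  case: (lerP D u) => // h.
  have h1 : 0 < (D - u) ^+ 2 by rewrite exprn_gt0 // subr_gt0.
  have h2 : 0 <= u * (D - u) by rewrite mulr_ge0 // subr_ge0 ltW.
  have h3 : D ^+ 2 - u ^+ 2 = (D - u) ^+ 2 + 2 * (u * (D - u)) by ring.
  exfalso; rewrite -/D in CS; move: CS h1 h2 h3; lra.
set x := Num.sqrt A in x0 xA *; set y := Num.sqrt B in y0 yB *.
move=> h; rewrite sqrrD xA yB; lra.
Qed.

Lemma norm2N n (v : 'cV[R]_n) : norm2 (- v) = norm2 v.
Proof. by rewrite /norm2; congr Num.sqrt; apply: eq_bigr => i _; rewrite mxE sqrrN. Qed.

Lemma norm2_sym n (a b : 'cV[R]_n) : norm2 (a - b) = norm2 (b - a).
Proof. by rewrite -norm2N opprB. Qed.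

Lemma norm2_0 n : norm2 (0 : 'cV[R]_n) = 0.
Proof. by rewrite /norm2 big1 ?sqrtr0 // => i _; rewrite mxE expr0n. Qed.

Lemma norm2_perm n (P : 'M[R]_n) (v : 'cV[R]_n) : is_perm_mx P ->
  norm2 (P *m v) = norm2 v.
Proof.
move=> /is_perm_mxP [sg ->]; rewrite -row_permE /norm2; congr Num.sqrt.
rewrite [RHS](reindex_inj (@perm.perm_inj _ sg)) /=; apply: eq_bigr => i _.
by rewrite mxE.
Qed.

Lemma cont_sum (T : topologicalType) (I : Type) (r : seq I) (F : I -> T -> R) :
  (forall i, continuous (F i)) -> continuous (fun z => \sum_(i <- r) F i z).
Proof.
move=> HF; elim: r => [|a r IH] z.
  under eq_fun do rewrite big_nil. exact: cst_continuous.
under eq_fun do rewrite big_cons.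
exact: (@continuousD _ _ _ (F a) (fun z => \sum_(i <- r) F i z) z (HF a z) (IH z)).
Qed.

Lemma norm2_cont n (c : 'cV[R]_n) : continuous (fun z : 'cV[R]_n => norm2 (z - c)).
Proof.
have H : continuous (fun z : 'cV[R]_n => \sum_(i < n) ((z - c) i 0) ^+ 2).
  apply: cont_sum => i z.
  under eq_fun do rewrite !mxE expr2.
  have hB : {for z, continuous (fun z : 'cV[R]_n => z i 0 - c i 0)}.
    apply: continuousB. exact: coord_continuous. exact: cst_continuous.
  exact: (@continuousM _ _ (fun z : 'cV[R]_n => z i 0 - c i 0) (fun z : 'cV[R]_n => z i 0 - c i 0) z hB hB).
move=> z; exact: (continuous_comp (H z) (@sqrt_continuous R _)).
Qed.

Lemma open_ball2 n (c : 'cV[R]_n) (e : R) : open [set z | norm2 (z - c) < e].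
Proof.
have -> : [set z | norm2 (z - c) < e] = (fun z => norm2 (z - c)) @^-1` [set x | x < e] by [].
apply: open_comp; last exact: open_lt.
move=> z _; exact: norm2_cont.
Qed.

End N2.
Theorem lemma5
  (R : realType) (d m : nat) (dT : measure_display) (T : measurableType dT)
  (* data model: s random with distribution P and support S, x = f(s) *)
  (P : probability T R) (sv : T -> 'cV[R]_d) (S : set 'cV[R]_d)
  (f : 'cV[R]_d -> 'cV[R]_m)
  (* J-VolMax: parametrized decoders / encoders, encoder class G, constant C *)
  (Theta Phi : Type) (fdec : Theta -> 'cV[R]_d -> 'cV[R]_m)
  (genc : Phi -> 'cV[R]_m -> 'cV[R]_d) (G : set ('cV[R]_m -> 'cV[R]_d))
  (C : R) (thhat : Theta) (phhat : Phi)
  (* finite sample set S_N *)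
  (N : nat) (s : 'I_N -> 'cV[R]_d)
  (* permutations and component-wise maps *)
  (Pihat : 'I_N -> 'M[R]_d) (rhohat : 'I_d -> R -> R)
  (Lf Lg Lrho gamma : R) (r : 'I_N -> R) :
  (d <= m)%N ->
  diffeo_onto_image f ->
  (forall w, S (sv w)) ->
  0 < C ->
  jvm_optimal P (fun w => f (sv w)) (f @` S) fdec genc G C thhat phhat ->
  (forall n, S (s n)) ->
  (forall n, SDI f (s n)) ->
  (forall n, is_perm_mx (Pihat n)) ->
  (forall k, bijective (rhohat k)) ->
  (forall n, genc phhat (f (s n))
             = Pihat n *m (\col_k rhohat k (s n k 0))) ->
  0 < Lf -> 0 < Lg -> 0 < Lrho ->
  lipschitz2 Lf f ->
  lipschitz2 Lg (genc phhat) ->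
  lipschitz2 Lrho (fun z : 'cV[R]_d => \col_k rhohat k (z k 0)) ->
  0 < gamma ->
  (forall (Pi : 'M[R]_d) (n : 'I_N), is_perm_mx Pi -> Pi != Pihat n ->
     gamma <= norm2 (genc phhat (f (s n)) - Pi *m (\col_k rhohat k (s n k 0)))) ->
  (forall n, 0 < r n /\ r n < gamma / (2 * (Lf * Lg + Lrho))) ->
  connected (\bigcup_(n in [set: 'I_N])
               [set z | S z /\ norm2 (z - s n) < r n]) ->
  exists Pi : 'M[R]_d, is_perm_mx Pi /\
    (forall n, Pihat n = Pi) /\
    (forall n, genc phhat (f (s n)) = Pi *m (\col_k rhohat k (s n k 0))).
Proof.
move=> _ _ _ _ _ HS _ Hperm _ Hg Lf0 Lg0 Lr0 Hf Hgl Hrho gam0 Hgam Hr Hc.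
set gv := fun n => genc phhat (f (s n)).
set rv := fun n => \col_k rhohat k (s n k 0) : 'cV[R]_d.
set K := Lf * Lg + Lrho.
have K0 : 0 < K by rewrite /K addr_gt0 // mulr_gt0.
have key : forall n n' z, S z -> norm2 (z - s n) < r n ->
    norm2 (z - s n') < r n' -> Pihat n = Pihat n'.
  move=> n n' z Sz hn hn'; apply/eqP; apply: contraT => neq.
  have neq' : Pihat n' != Pihat n by rewrite eq_sym.
  have hg := Hgam (Pihat n') n (Hperm n') neq'.
  set dl := norm2 (s n - s n').
  have hdl : dl <= norm2 (z - s n) + norm2 (z - s n').
    rewrite /dl; have -> : s n - s n' = (s n - z) + (z - s n') by rewrite addrA subrK.
    by rewrite (@norm2_sym _ _ z (s n)); exact: norm2_triangle.
  have e' := Hg n'.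
  have eq : gv n - Pihat n' *m rv n = (gv n - gv n') + Pihat n' *m (rv n' - rv n).
    by rewrite /gv /rv e' mulmxBr addrA subrK.
  have h1 : norm2 (gv n - gv n') <= Lg * (Lf * dl).
    apply: (le_trans (Hgl _ _)); rewrite ler_pM2l //; exact: Hf.
  have h2 : norm2 (Pihat n' *m (rv n' - rv n)) <= Lrho * dl.
    rewrite norm2_perm //; have := Hrho (s n') (s n); rewrite /= -/(rv n') -/(rv n).
    by rewrite (@norm2_sym _ _ (s n')).
  have h3 := @norm2_triangle _ _ (gv n - gv n') (Pihat n' *m (rv n' - rv n)).
  rewrite -eq in h3.
  have [_ hrn] := Hr n; have [_ hrn'] := Hr n'.
  rewrite ltr_pdivlMr ?mulr_gt0 // -/K in hrn.
  rewrite ltr_pdivlMr ?mulr_gt0 // -/K in hrn'.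
  have h4 : K * dl < K * (r n + r n').
    by rewrite ltr_pM2l //; apply: (le_lt_trans hdl); exact: ltrD.
  have h5 : Lg * (Lf * dl) + Lrho * dl = K * dl by rewrite /K; ring.
  have h6 : K * (r n + r n') * 2 = r n * (2 * K) + r n' * (2 * K) by ring.
  move: hg h1 h2 h3 h4 h5 h6 hrn hrn'; rewrite -/(gv n) -/(rv n).
  set X1 := norm2 _; set X2 := norm2 _; set X3 := norm2 _.
  set P1 := Lg * (Lf * dl); set P2 := Lrho * dl; set P3 := K * dl.
  set P4 := K * (r n + r n'); set P5 := r n * (2 * K); set P6 := r n' * (2 * K).
  lra.
have [[n0 _]|nN] := pselect (exists n : 'I_N, True); last first.
  exists 1%:M; split; first exact: is_perm_mx1.
  by split => n; exfalso; apply: nN; exists n.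
pose ball n := [set z | S z /\ norm2 (z - s n) < r n].
pose Good := [set n | Pihat n = Pihat n0].
have BU : \bigcup_(n in Good) ball n = \bigcup_(n in [set: 'I_N]) ball n.
  apply: Hc.
  - exists (s n0); exists n0 => //; split; first exact: HS.
    by rewrite subrr norm2_0; case: (Hr n0).
  - exists (\bigcup_(n in Good) [set z | norm2 (z - s n) < r n]).
      by apply: bigcup_open => n _; exact: open_ball2.
    apply/seteqP; split => z.
      by move=> [n gn [Sz hz]]; split; [exists n | exists n].
    by move=> [[n _ [Sz hz]] [n' gn' hz']]; exists n'.
  - exists (~` \bigcup_(n in ~` Good) [set z | norm2 (z - s n) < r n]).
      by apply: open_closedC; apply: bigcup_open => n _; exact: open_ball2.
    apply/seteqP; split => z.
      move=> [n gn [Sz hz]]; split; first by exists n.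
      move=> [n' bn' hz']; apply: bn'; rewrite /Good /=.
      by rewrite (key n' n z Sz hz' hz).
    move=> [[n _ [Sz hz]] nb]; have [g|ng] := pselect (Good n).
      by exists n.
    by exfalso; apply: nb; exists n.
have Hall : forall n, Pihat n = Pihat n0.
  move=> n; have : (\bigcup_(n in [set: 'I_N]) ball n) (s n).
    exists n => //; split; first exact: HS.
    by rewrite subrr norm2_0; case: (Hr n).
  rewrite -BU => -[n'' gn'' [_ h]].
  rewrite (key n n'' (s n) (HS n) _ h) //.
  by rewrite subrr norm2_0; case: (Hr n).
exists (Pihat n0); split; first exact: Hperm.
split => // n; rewrite -(Hall n); exact: Hg.
Qed.
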